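(* For every sufficiently large natural number $n$, every natural number $\alpha$, and every $u \in \{0,1\}^n$ with $C(u) \geq \alpha + 12 \log n$, \[ \frac{1}{2n^{12}}\, 2^{n-\alpha} \leq d_\alpha (u) \leq n^5 \cdot 2^{n-\alpha}, \] where $d_\alpha(u) = |\{x \in \{0,1\}^n \mid C(u) - C(u \mid x) \geq \alpha\}|$.
   Context: $C(x)$ denotes the plain Kolmogorov complexity of the binary string $x$ with respect to a fixed universal Turing machine; $C(x \mid y)$ denotes the conditional plain Kolmogorov complexity of $x$ given $y$ with respect to a fixed universal conditional machine. Logarithms are base $2$. *)

(* Defs.v *)
From Stdlib Require Import Reals ZArith ClassicalEpsilon.
From mathcomp Require Import all_boot.

Set Implicit Arguments.
Unset Strict Implicit.
Unset Printing Implicit Defensive.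

(* A model of computation: unary partial recursive functions on nat,  *)
(* with pairing (a standard Turing-complete basis).                   *)

Definition npair (a b : nat) : nat := (2 ^ a * (2 * b + 1)).-1.

Inductive prog : Type :=
| PZero : prog
| PSucc : prog
| PId   : prog
| PFst  : prog
| PSnd  : prog
| PComp : prog -> prog -> prog
| PPair : prog -> prog -> prog
| PRec  : prog -> prog -> prog
| PMin  : prog -> prog.

Inductive eval : prog -> nat -> nat -> Prop :=
| ev_zero x : eval PZero x 0
| ev_succ x : eval PSucc x x.+1
| ev_id x : eval PId x x
| ev_fst a b : eval PFst (npair a b) a
| ev_snd a b : eval PSnd (npair a b) b
| ev_comp f g x y z : eval g x y -> eval f y z -> eval (PComp f g) x z
| ev_pair f g x a b : eval f x a -> eval g x b -> eval (PPair f g) x (npair a b)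
| ev_rec0 f g x v : eval f x v -> eval (PRec f g) (npair x 0) v
| ev_recS f g x n w v :
    eval (PRec f g) (npair x n) w -> eval g (npair x (npair n w)) v ->
    eval (PRec f g) (npair x n.+1) v
| ev_min f x n :
    eval f (npair x n) 0 ->
    (forall m, m < n -> exists k, eval f (npair x m) k.+1) ->
    eval (PMin f) x n.

(* Bijective encoding of binary strings into nat *)
Fixpoint enc (s : seq bool) : nat :=
  match s with
  | [::] => 0
  | b :: s' => (2 * enc s' + 1 + b)%N
  end.

Definition computable1 (f : seq bool -> option (seq bool)) : Prop :=
  exists e : prog, forall p v,
    eval e (enc p) v <-> exists x, f p = Some x /\ v = enc x.

Definition computable2 (f : seq bool -> seq bool -> option (seq bool)) : Prop :=
  exists e : prog, forall p y v,
    eval e (npair (enc p) (enc y)) v <-> exists x, f p y = Some x /\ v = enc x.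

Definition universal_machine (U : seq bool -> option (seq bool)) : Prop :=
  computable1 U /\
  forall V, computable1 V -> exists c : nat, forall p x,
    V p = Some x -> exists q, U q = Some x /\ size q <= size p + c.

Definition universal_cond_machine
  (U : seq bool -> seq bool -> option (seq bool)) : Prop :=
  computable2 U /\
  forall V, computable2 V -> exists c : nat, forall p y x,
    V p y = Some x -> exists q, U q y = Some x /\ size q <= size p + c.

Definition KC (U : seq bool -> option (seq bool)) (x : seq bool) : nat :=
  epsilon (inhabits 0%N) (fun k =>
    (exists p, U p = Some x /\ size p = k) /\
    (forall p, U p = Some x -> k <= size p)).

Definition KCc (U : seq bool -> seq bool -> option (seq bool))
  (x y : seq bool) : nat :=
  epsilon (inhabits 0%N) (fun k =>
    (exists p, U p y = Some x /\ size p = k) /\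
    (forall p, U p y = Some x -> k <= size p)).

Definition d_alpha (U0 : seq bool -> option (seq bool))
  (U : seq bool -> seq bool -> option (seq bool))
  (n alpha : nat) (u : seq bool) : nat :=
  #|[set x : n.-tuple bool |
      (Z.of_nat alpha <=? Z.of_nat (KC U0 u) - Z.of_nat (KCc U u (val x)))%Z]|.

Definition log2R (x : R) : R := Rdiv (ln x) (ln (IZR 2%Z)).

(* Main.v *)
Require Import Defs.
From Stdlib Require Import Reals ZArith Lra.
From Stdlib Require Import ClassicalEpsilon.
From mathcomp Require Import all_boot.
From Stdlib Require Import Lia.
From mathcomp Require Import zify.
Set Implicit Arguments. Unset Strict Implicit. Unset Printing Implicit Defensive.

Lemma npair_succ a b : (npair a b).+1 = 2 ^ a * (2 * b + 1).
Proof. rewrite /npair prednK // muln_gt0 expn_gt0 /=; lia. Qed.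

Lemma logn2_odd a b : logn 2 (2 ^ a * (2 * b + 1)) = a.
Proof.
rewrite lognM ?expn_gt0 //; last by lia.
rewrite pfactorK // logn_coprime ?addn0 //.
by rewrite coprime2n addn1 /= oddM.
Qed.

Definition pfst z := logn 2 z.+1.
Definition psnd z := (z.+1 %/ 2 ^ pfst z).-1 %/ 2.

Lemma pfst_pair a b : pfst (npair a b) = a.
Proof. by rewrite /pfst npair_succ logn2_odd. Qed.

Lemma psnd_pair a b : psnd (npair a b) = b.
Proof.
rewrite /psnd pfst_pair npair_succ mulKn ?expn_gt0 // addn1 /=.
by rewrite mulKn.
Qed.

Lemma pair_surj z : npair (pfst z) (psnd z) = z.
Proof.
suff [a [b ->]] : exists a b, z = npair a b by rewrite pfst_pair psnd_pair.
have [m cm Hz] := pfactor_coprime (isT : prime 2) (ltn0Sn z).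
have om : odd m by rewrite -coprime2n.
set a := logn 2 z.+1 in Hz *.
exists a, m./2.
apply: succn_inj; rewrite npair_succ Hz mulnC; congr (_ * _).
rewrite -{1}(odd_double_half m) om -muln2; lia.
Qed.

Lemma npair_inj a b c d : npair a b = npair c d -> a = c /\ b = d.
Proof. by move=> E; split; [rewrite -(pfst_pair a b) E pfst_pair | rewrite -(psnd_pair a b) E psnd_pair]. Qed.

Definition nrec (a : nat) (g : nat -> nat -> nat) (n : nat) : nat :=
  nat_rec (fun _ => nat) a g n.
Lemma nrec0 a g : nrec a g 0 = a. Proof. by []. Qed.
Lemma nrecS a g n : nrec a g n.+1 = g n (nrec a g n). Proof. by []. Qed.

Definition tc (f : nat -> nat) := exists e, forall x, eval e x (f x).
Definition tc2 (F : nat -> nat -> nat) := tc (fun z => F (pfst z) (psnd z)).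
Definition tc3 (F : nat -> nat -> nat -> nat) :=
  tc (fun z => F (pfst z) (pfst (psnd z)) (psnd (psnd z))).

Lemma tc_ext f g : (forall x, f x = g x) -> tc f -> tc g.
Proof. by move=> E [e He]; exists e => x; rewrite -E. Qed.
Lemma tc2_ext F G : (forall x y, F x y = G x y) -> tc2 F -> tc2 G.
Proof. by move=> E; apply: tc_ext => z; rewrite E. Qed.
Lemma tc3_ext F G : (forall x y w, F x y w = G x y w) -> tc3 F -> tc3 G.
Proof. by move=> E; apply: tc_ext => z; rewrite E. Qed.

Lemma tc_id : tc (fun z => z).
Proof. by exists PId => x; apply: ev_id. Qed.
Lemma tc_succ : tc S.
Proof. by exists PSucc => x; apply: ev_succ. Qed.
Lemma tc_fst : tc pfst.
Proof. by exists PFst => x; rewrite -{1}(pair_surj x); apply: ev_fst. Qed.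
Lemma tc_snd : tc psnd.
Proof. by exists PSnd => x; rewrite -{1}(pair_surj x); apply: ev_snd. Qed.
Lemma tc_comp f g : tc f -> tc g -> tc (fun x => f (g x)).
Proof. by move=> [ef Hf] [eg Hg]; exists (PComp ef eg) => x; apply: ev_comp. Qed.
Lemma tc_pair f g : tc f -> tc g -> tc (fun x => npair (f x) (g x)).
Proof. by move=> [ef Hf] [eg Hg]; exists (PPair ef eg) => x; apply: ev_pair. Qed.
Lemma tc_const c : tc (fun _ => c).
Proof.
elim: c => [|c [e He]]; first by exists PZero => x; apply: ev_zero.
by exists (PComp PSucc e) => x; apply: ev_comp (He x) (ev_succ _).
Qed.

Lemma tc2_app F a b : tc2 F -> tc a -> tc b -> tc (fun x => F (a x) (b x)).
Proof.
move=> HF Ha Hb; have := tc_comp HF (tc_pair Ha Hb).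
by apply: tc_ext => x; rewrite pfst_pair psnd_pair.
Qed.
Lemma tc3_app F a b c : tc3 F -> tc a -> tc b -> tc c -> tc (fun x => F (a x) (b x) (c x)).
Proof.
move=> HF Ha Hb Hc; have := tc_comp HF (tc_pair Ha (tc_pair Hb Hc)).
by apply: tc_ext => x; rewrite !pfst_pair !psnd_pair pfst_pair.
Qed.

Lemma tc2_rec f g : tc f -> tc3 g -> tc2 (fun x n => nrec (f x) (g x) n).
Proof.
move=> [ef Hf] [eg Hg]; exists (PRec ef eg) => z.
rewrite -{1}(pair_surj z); move: (pfst z) (psnd z) => x n.
elim: n => [|n IH] /=; first by apply: ev_rec0.
apply: ev_recS IH _.
by have := Hg (npair x (npair n (nrec (f x) (g x) n))); rewrite !pfst_pair !psnd_pair pfst_pair.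
Qed.

Lemma tc_tc2 F : tc2 F -> tc (fun z => F (pfst z) (psnd z)).
Proof. by []. Qed.

Ltac tcs :=
  match goal with
  | |- tc (fun _ => ?c) => exact: tc_const
  | |- tc (fun z => z) => exact: tc_id
  | |- tc (fun z => ?F (@?a z) (@?b z) (@?c z)) =>
      apply: (@tc3_app F a b c); [solve [eauto with tcdb] | tcs | tcs | tcs]
  | |- tc (fun z => ?F (@?a z) (@?b z)) =>
      apply: (@tc2_app F a b); [solve [eauto with tcdb] | tcs | tcs]
  | |- tc (fun z => ?F (@?a z)) =>
      apply: (@tc_comp F a); [solve [eauto with tcdb] | tcs]
  end.

Lemma tc2_npair : tc2 npair.
Proof. by apply: tc_ext tc_id => z; rewrite pair_surj. Qed.
Lemma tc2_pfst : tc2 (fun x y => x).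
Proof. exact: tc_fst. Qed.
Lemma tc2_psnd : tc2 (fun x y => y).
Proof. exact: tc_snd. Qed.
#[export] Hint Resolve tc_succ tc_fst tc_snd tc2_npair : tcdb.

Definition ifz (a b c : nat) := if a is 0 then b else c.
Lemma tc3_ifz : tc3 ifz.
Proof.
pose g := fun x n => nrec (pfst x) (fun _ _ => psnd x) n.
have H : tc2 g.
  apply: (@tc2_rec pfst (fun x _ _ => psnd x)); first exact: tc_fst.
  rewrite /tc3; tcs.
have := tc2_app H (tc_pair (tc_comp tc_fst tc_snd) (tc_comp tc_snd tc_snd)) tc_fst.
by apply: tc_ext => z; rewrite /g pfst_pair psnd_pair; case: (pfst z).
Qed.
#[export] Hint Resolve tc3_ifz : tcdb.

Lemma tc_pred : tc predn.
Proof.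
have := @tc2_rec (fun _ => 0) (fun _ i _ => i) (tc_const 0) (ltac:(rewrite /tc3; tcs)).
move=> H; have := tc2_app H (tc_const 0) tc_id.
by apply: tc_ext => z; case: z.
Qed.
#[export] Hint Resolve tc_pred : tcdb.

Lemma tc2_iter f : tc f -> tc2 (fun x n => iter n f x).
Proof.
move=> Hf; apply: (@tc2_ext (fun x n => nrec x (fun _ w => f w) n)).
  by move=> x n; elim: n => //= n ->.
apply: tc2_rec; first exact: tc_id.
rewrite /tc3; tcs.
Qed.

Lemma tc2_add : tc2 addn.
Proof. apply: (tc2_ext (F := fun x n => iter n S x)); last exact: tc2_iter tc_succ.
by move=> x n; rewrite iter_succn addnC. Qed.
Lemma tc2_sub : tc2 subn.
Proof. apply: (tc2_ext (F := fun x n => iter n predn x)); last exact: tc2_iter tc_pred.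
move=> x n; elim: n => [|n IH]; rewrite ?subn0 //= IH; lia. Qed.
#[export] Hint Resolve tc2_add tc2_sub : tcdb.
Lemma tc2_mul : tc2 muln.
Proof.
apply: (@tc2_ext (fun x n => nrec 0 (fun _ w => w + x) n)).
  by move=> x n; elim: n => [|n IH]; rewrite ?nrec0 ?nrecS ?IH; lia.
apply: tc2_rec; first exact: tc_const.
rewrite /tc3; tcs.
Qed.
#[export] Hint Resolve tc2_mul : tcdb.
Lemma tc_exp2 : tc (fun n => 2 ^ n).
Proof.
have H : tc2 (fun x n => nrec 1 (fun _ w => w * 2) n).
  apply: (@tc2_rec (fun _ => 1)); first exact: tc_const.
  rewrite /tc3; tcs.
have := tc2_app H (tc_const 0) tc_id.
by apply: tc_ext => n; elim: n => //= n ->; rewrite expnS mulnC.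
Qed.
#[export] Hint Resolve tc_exp2 : tcdb.

Definition bsum (F : nat -> nat -> nat) x n := \sum_(i < n) F x i.
Lemma tc2_bsum F : tc2 F -> tc2 (bsum F).
Proof.
move=> HF; apply: (@tc2_ext (fun x n => nrec 0 (fun i w => w + F x i) n)).
  move=> x n; elim: n => [|n IH]; rewrite /bsum ?big_ord0 // big_ord_recr /=.
  by rewrite IH.
apply: (@tc2_rec (fun _ => 0) (fun x i w => w + F x i)); first exact: tc_const.
rewrite /tc3; tcs.
Qed.

Lemma tc_nrec a (G : nat -> nat -> nat -> nat) n :
  tc a -> tc (fun y => G (pfst y) (pfst (psnd y)) (psnd (psnd y))) -> tc n ->
  tc (fun z => nrec (a z) (G z) (n z)).
Proof.
move=> Ha HG Hn.
have H := @tc2_rec a G Ha HG.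
exact: (tc2_app H tc_id Hn).
Qed.

Ltac tcs2 :=
  cbv beta;
  match goal with
  | |- tc (fun _ => ?c) => exact: tc_const
  | |- tc (fun z => z) => exact: tc_id
  | |- tc (fun z => nrec (@?a z) (@?G z) (@?n z)) =>
      apply: (@tc_nrec a G n); [tcs2 | tcs2 | tcs2]
  | |- tc (fun z => ?F (@?a z) (@?b z) (@?c z)) =>
      apply: (@tc3_app F a b c); [solve [eauto with tcdb] | tcs2 | tcs2 | tcs2]
  | |- tc (fun z => ?F (@?a z) (@?b z)) =>
      apply: (@tc2_app F a b); [solve [eauto with tcdb] | tcs2 | tcs2]
  | |- tc (fun z => ?F (@?a z)) =>
      apply: (@tc_comp F a); [solve [eauto with tcdb] | tcs2]
  end.

Definition minstep (g : nat -> nat) i s :=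
  ifz s (ifz (g i) 1 (ifz (g i).-1 i.+2 0)) s.

Fixpoint bev (e : prog) (x t : nat) : nat :=
  match e with
  | PZero => 1
  | PSucc => x.+2
  | PId => x.+1
  | PFst => (pfst x).+1
  | PSnd => (psnd x).+1
  | PComp f g => ifz (bev g x t) 0 (bev f (bev g x t).-1 t)
  | PPair f g => ifz (bev f x t) 0 (ifz (bev g x t) 0
                    (npair (bev f x t).-1 (bev g x t).-1).+1)
  | PRec f g => nrec (bev f (pfst x) t)
      (fun i w => ifz w 0 (bev g (npair (pfst x) (npair i w.-1)) t)) (psnd x)
  | PMin f => ifz (nrec 0 (minstep (fun i => bev f (npair x i) t)) t) 0
               (ifz (nrec 0 (minstep (fun i => bev f (npair x i) t)) t).-1 0
                  (nrec 0 (minstep (fun i => bev f (npair x i) t)) t).-1)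
  end.

Lemma tc2_bev e : tc2 (bev e).
Proof.
elim: e => [|||||f IHf g IHg|f IHf g IHg|f IHf g IHg|f IHf]; rewrite /tc2 /=;
  rewrite /minstep; tcs2.
Qed.

Lemma minS0 g k : nrec 0 (minstep g) k = 0 -> forall j, j < k -> 2 <= g j.
Proof.
elim: k => [|k IH] //= H j Hj.
move: H; rewrite /minstep; case E: (nrec 0 (minstep g) k) => [|s] //=.
case Eg: (g k) => [|[|b]] //= _.
rewrite ltnS leq_eqVlt in Hj; case/orP: Hj => [/eqP->|Hj]; first by rewrite Eg.
exact: IH.
Qed.

Lemma minS2 g k v : nrec 0 (minstep g) k = v.+2 ->
  [/\ v < k, g v = 1 & forall j, j < v -> 2 <= g j].
Proof.
elim: k => [|k IH] //= H.
move: H; rewrite /minstep; case E: (nrec 0 (minstep g) k) => [|s] /=.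
  case Eg: (g k) => [|[|b]] //= [<-]; split=> //; exact: minS0 E.
move=> [Es]; rewrite Es in E; case: (IH E) => *; split=> //; lia.
Qed.

Lemma minS_found g k v : (forall j, j < v -> 2 <= g j) -> g v = 1 -> v < k ->
  nrec 0 (minstep g) k = v.+2.
Proof.
move=> Hj Hv; elim: k => [|k IH] // Hk /=.
rewrite /minstep.
rewrite ltnS leq_eqVlt in Hk; case/orP: Hk => [/eqP Ek|Hk]; last by rewrite IH.
subst k.
have -> : nrec 0 (minstep g) v = 0.
  elim: v Hj {Hv IH} => [|v IHv] Hj //=.
  rewrite IHv; last by move=> j Hj'; apply: Hj; lia.
  rewrite /minstep /=; have := Hj v (ltnSn v); case: (g v) => [|[|b]] //=.
by rewrite /= Hv.
Qed.

Lemma minS01 g k : nrec 0 (minstep g) k = 1 -> exists v, v < k /\ g v = 0 /\ forall j, j < v -> 2 <= g j.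
Proof.
elim: k => [|k IH] //= H.
move: H; rewrite /minstep; case E: (nrec 0 (minstep g) k) => [|s] /=.
  case Eg: (g k) => [|[|b]] //= _; exists k; split=> //; split=> //; exact: minS0 E.
move=> [Es]; rewrite Es in E; case: (IH E) => w [? ?]; exists w; split=> //; lia.
Qed.

Lemma bev_mono e t t' : t <= t' -> forall x v, bev e x t = v.+1 -> bev e x t' = v.+1.
Proof.
move=> Htt'.
elim: e => [|||||f IHf g IHg|f IHf g IHg|f IHf g IHg|f IHf] x v //=.
- case E: (bev g x t) => [|a] //= H.
  by rewrite (IHg _ _ E) /=; apply: IHf.
- case E1: (bev f x t) => [|a] //=; case E2: (bev g x t) => [|b] //= H.
  by rewrite (IHf _ _ E1) (IHg _ _ E2).
- move: (psnd x) v; elim=> [|n IH] w /=; first exact: IHf.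
  case E: (nrec _ _ n) => [|a] //= H.
  by rewrite (IH _ E) /=; apply: IHg.
- set g := (fun i => bev f (npair x i) t).
  case E: (nrec 0 (minstep g) t) => [|[|s]] //= [Hs]; subst s.
  case: (minS2 E) => Hv Hgv Hj.
  rewrite (@minS_found _ t' v) //; last by lia.
  + move=> j Hj'; have := Hj j Hj'; rewrite /g.
    case E': (bev f (npair x j) t) => [|k] //= Hk.
    by rewrite (IHf _ _ E').
  + by apply: IHf.
Qed.

Lemma bev_sound e : forall x t v, bev e x t = v.+1 -> eval e x v.
Proof.
elim: e => [|||||f IHf g IHg|f IHf g IHg|f IHf g IHg|f IHf] x t v /=.
- by case=> <-; apply: ev_zero.
- by case=> <-; apply: ev_succ.
- by case=> <-; apply: ev_id.
- by case=> <-; rewrite -{1}(pair_surj x); apply: ev_fst.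
- by case=> <-; rewrite -{1}(pair_surj x); apply: ev_snd.
- case E: (bev g x t) => [|a] //= H.
  exact: ev_comp (IHg _ _ _ E) (IHf _ _ _ H).
- case E1: (bev f x t) => [|a] //=; case E2: (bev g x t) => [|b] //= [<-].
  exact: ev_pair (IHf _ _ _ E1) (IHg _ _ _ E2).
- have key : forall y n w, nrec (bev f y t)
      (fun i w => ifz w 0 (bev g (npair y (npair i w.-1)) t)) n = w.+1 ->
      eval (PRec f g) (npair y n) w.
    move=> y; elim=> [|n IH] w /=.
      by move=> H; apply: ev_rec0; apply: IHf H.
    case E: (nrec _ _ n) => [|a] //= H.
    exact: ev_recS (IH _ E) (IHg _ _ _ H).
  by move=> H; rewrite -(pair_surj x); apply: key H.
- set g := (fun i => bev f (npair x i) t).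
  case E: (nrec 0 (minstep g) t) => [|[|s]] //= [Hs]; subst s.
  case: (minS2 E) => Hv Hgv Hj.
  apply: ev_min; first exact: IHf Hgv.
  move=> m Hm; have := Hj m Hm; rewrite /g.
  case E': (bev f (npair x m) t) => [|[|k]] // _.
  by exists k; apply: IHf E'.
Qed.

Lemma uniform_fuel (Q : nat -> nat -> Prop) n :
  (forall m t t', t <= t' -> Q m t -> Q m t') ->
  (forall m, m < n -> exists t, Q m t) -> exists T, forall m, m < n -> Q m T.
Proof.
move=> Hm; elim: n => [|n IH] H; first by exists 0.
case: IH => [m Hmn|T HT]; first by apply: H; lia.
case: (H n (ltnSn n)) => t Ht.
exists (maxn T t) => m; rewrite ltnS leq_eqVlt => /orP [/eqP->|Hmn].
  by apply: Hm Ht; apply: leq_maxr.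
by apply: Hm (HT _ Hmn); apply: leq_maxl.
Qed.

Lemma inv_comp f g x v : eval (PComp f g) x v -> exists y, eval g x y /\ eval f y v.
Proof. by inversion 1; eauto. Qed.
Lemma inv_pair f g x v : eval (PPair f g) x v ->
  exists a b, [/\ eval f x a, eval g x b & v = npair a b].
Proof. by inversion 1; do 2 eexists; split; eauto. Qed.
Lemma inv_rec f g y n w : eval (PRec f g) (npair y n) w ->
  (n = 0 /\ eval f y w) \/
  (exists m u, n = m.+1 /\ eval (PRec f g) (npair y m) u /\ eval g (npair y (npair m u)) w).
Proof.
move=> H; inversion H; subst;
  match goal with Hp : npair _ _ = npair _ _ |- _ => case: (npair_inj Hp) => ? ? end; subst.
- by left.
- by right; do 2 eexists; split; [reflexivity|split; eauto].
Qed.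
Lemma inv_min f x v : eval (PMin f) x v ->
  eval f (npair x v) 0 /\ (forall m, m < v -> exists k, eval f (npair x m) k.+1).
Proof. by inversion 1. Qed.
Lemma inv_fst x v : eval PFst x v -> v = pfst x.
Proof. by inversion 1; rewrite pfst_pair. Qed.
Lemma inv_snd x v : eval PSnd x v -> v = psnd x.
Proof. by inversion 1; rewrite psnd_pair. Qed.

Lemma bev_complete e : forall x v, eval e x v -> exists t, bev e x t = v.+1.
Proof.
elim: e => [|||||f IHf g IHg|f IHf g IHg|f IHf g IHg|f IHf] x v H.
- by inversion H; exists 0.
- by inversion H; exists 0.
- by inversion H; exists 0.
- by rewrite (inv_fst H); exists 0.
- by rewrite (inv_snd H); exists 0.
- case: (inv_comp H) => y [Hg Hf].
  case: (IHg _ _ Hg) => t1 E1; case: (IHf _ _ Hf) => t2 E2.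
  exists (maxn t1 t2) => /=.
  rewrite (bev_mono (leq_maxl t1 t2) E1) /=.
  exact: (bev_mono (leq_maxr t1 t2) E2).
- case: (inv_pair H) => a [b [Hf Hg ->]].
  case: (IHf _ _ Hf) => t1 E1; case: (IHg _ _ Hg) => t2 E2.
  exists (maxn t1 t2) => /=.
  by rewrite (bev_mono (leq_maxl t1 t2) E1) (bev_mono (leq_maxr t1 t2) E2).
- suff: forall n y w, eval (PRec f g) (npair y n) w ->
      exists t, bev (PRec f g) (npair y n) t = w.+1.
    by move=> Hs; rewrite -(pair_surj x); apply: Hs; rewrite pair_surj.
  elim=> [|n IH] y w /inv_rec [[En Hf]|[m [u [En [Hr Hg]]]]] //.
  + case: (IHf _ _ Hf) => t Ht; exists t; by rewrite /= pfst_pair psnd_pair.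
  + case: En => ?; subst m.
    case: (IH _ _ Hr) => t1 E1; case: (IHg _ _ Hg) => t2 E2.
    exists (maxn t1 t2); rewrite /= pfst_pair psnd_pair /=.
    have := bev_mono (leq_maxl t1 t2) E1; rewrite /= pfst_pair psnd_pair => ->.
    exact: (bev_mono (leq_maxr t1 t2) E2).
- case: (inv_min H) => H2 H3.
  case: (IHf _ _ H2) => t0 E0.
  have [T HT] : exists T, forall m, m < v -> exists k, bev f (npair x m) T = k.+2.
    apply: uniform_fuel.
      by move=> m t t' Htt [k Hk]; exists k; apply: bev_mono Hk.
    move=> m Hm; case: (H3 m Hm) => k Hk; case: (IHf _ _ Hk) => t Ht.
    by exists t, k.
  exists (maxn (maxn T t0) v.+1) => /=.
  rewrite (@minS_found _ _ v) //=.
  + move=> j Hj; case: (HT j Hj) => k Hk.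
    by rewrite (bev_mono _ Hk) //; apply: leq_trans (leq_maxl _ _) (leq_maxl _ _).
  + by rewrite (bev_mono _ E0) //; apply: leq_trans (leq_maxr _ _) (leq_maxl _ _).
  + exact: leq_maxr.
Qed.

Lemma eval_bev e x v : eval e x v <-> exists t, bev e x t = v.+1.
Proof. by split; [apply: bev_complete | case=> t; apply: bev_sound]. Qed.

Lemma eval_det e x v w : eval e x v -> eval e x w -> v = w.
Proof.
move=> /bev_complete [t1 E1] /bev_complete [t2 E2].
have := bev_mono (leq_maxl t1 t2) E1; rewrite (bev_mono (leq_maxr t1 t2) E2).
by case.
Qed.

Fixpoint decf (k n : nat) : seq bool :=
  match k with
  | 0 => [::]
  | k.+1 => if n is n'.+1 then odd n' :: decf k n'./2 else [::]
  end.
Definition dec (n : nat) := decf n n.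

Lemma enc_decf k n : n <= k -> enc (decf k n) = n.
Proof.
elim: k n => [|k IH] [|n] //= Hn.
rewrite IH; last by lia.
rewrite -{3}(odd_double_half n); case: (odd n) => /=; lia.
Qed.
Lemma enc_dec n : enc (dec n) = n.
Proof. exact: enc_decf. Qed.
Lemma enc_inj : injective enc.
Proof.
elim=> [|a s IH] [|b t] //=; try lia.
move=> E; have Eab : a = b by move: E; case: a; case: b => //=; lia.
subst b; congr (_ :: _); apply: IH; lia.
Qed.
Lemma dec_enc s : dec (enc s) = s.
Proof. by apply: enc_inj; rewrite enc_dec. Qed.

Lemma tc_eval e f x v : (forall x, eval e x (f x)) -> eval e x v -> v = f x.
Proof. by move=> He H; apply: eval_det H (He x). Qed.

Definition srch (G H : nat -> nat -> nat) (q : seq bool) : option (seq bool) :=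
  match excluded_middle_informative (exists s, G (enc q) s == 0) with
  | left h => Some (dec (H (enc q) (ex_minn h)))
  | right _ => None
  end.

Lemma srch_computable G H : tc2 G -> tc2 H -> computable1 (srch G H).
Proof.
move=> [eG HG] [eH HH].
have EG c s : eval eG (npair c s) (G c s) by have := HG (npair c s); rewrite pfst_pair psnd_pair.
have EH c s : eval eH (npair c s) (H c s) by have := HH (npair c s); rewrite pfst_pair psnd_pair.
exists (PComp eH (PPair PId (PMin eG))) => p v; split.
- case/inv_comp => y [/inv_pair [a [s [Ha Hs ->]]] Hv].
  have Ea : a = enc p by inversion Ha.
  subst a; case/inv_min: Hs => H0 Hlt.
  have G0 : G (enc p) s = 0 by rewrite (tc_eval HG H0) pfst_pair psnd_pair.
  rewrite /srch; case: excluded_middle_informative => [h|[]]; last by exists s; apply/eqP.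
  case: ex_minnP => m /eqP Gm Hmin.
  have Ems : m = s.
    apply/eqP; rewrite eqn_leq Hmin ?G0 //=.
    rewrite leqNgt; apply/negP => Hsm; case: (Hlt _ Hsm) => k Hk.
    by move: (tc_eval HG Hk); rewrite pfst_pair psnd_pair Gm.
  subst m; eexists; split; first reflexivity.
  by rewrite enc_dec (tc_eval HH Hv) pfst_pair psnd_pair.
- case=> x []; rewrite /srch; case: excluded_middle_informative => // h.
  case: ex_minnP => m /eqP Gm Hmin [<-] ->; rewrite enc_dec.
  apply: ev_comp (EH _ _).
  apply: ev_pair; first exact: ev_id.
  apply: ev_min; first by rewrite -Gm.
  move=> k Hk; exists (G (enc p) k).-1.
  have : G (enc p) k != 0 by apply/negP => /Hmin; lia.
  by case E: (G (enc p) k) => [|r] //= _; rewrite -E.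
Qed.

Lemma comp2_computable (U0 : seq bool -> option (seq bool)) P :
  computable1 U0 -> tc2 P ->
  computable2 (fun q x => U0 (dec (P (enc q) (enc x)))).
Proof.
move=> [e0 H0] [eP HP].
exists (PComp e0 eP) => q x v; split.
- case/inv_comp => y [Hy Hv].
  have := tc_eval HP Hy; rewrite pfst_pair psnd_pair => Ey; subst y.
  by apply/H0; rewrite enc_dec.
- move=> Hx; apply: ev_comp.
    by have := HP (npair (enc q) (enc x)); rewrite pfst_pair psnd_pair.
  by rewrite pfst_pair psnd_pair -[X in eval e0 X v](enc_dec (P (enc q) (enc x))); apply/H0.
Qed.

Lemma id_computable1 : computable1 (fun p => Some p).
Proof.
exists PId => p v; split; first by move=> H; inversion H; eauto.
by case=> x [[->] ->]; apply: ev_id.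
Qed.
Lemma id_computable2 : computable2 (fun p y => Some p).
Proof.
exists PFst => p y v; split; first by move/inv_fst; rewrite pfst_pair => ->; eauto.
by case=> x [[->] ->]; apply: ev_fst.
Qed.

Lemma enc_cons b s : enc (b :: s) = (2 * enc s + 1 + b)%N. Proof. by []. Qed.

Lemma enc_cat s t : enc (s ++ t) = enc s + 2 ^ size s * enc t.
Proof. elim: s => [|b s IH] /=; first by rewrite mul1n. rewrite IH expnS; lia. Qed.

Lemma enc_range s : 2 ^ size s - 1 <= enc s < 2 ^ (size s).+1 - 1.
Proof.
elim: s => [|b s IH] //=; move: IH; rewrite !expnS.
have := expn_gt0 2 (size s); case: b => /=; lia.
Qed.

Lemma size_enc s : size s <= enc s.
Proof. elim: s => //= b s IH; lia. Qed.

Lemma size_dec_range n c : 2 ^ n - 1 <= c < 2 ^ n.+1 - 1 -> size (dec c) = n.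
Proof.
move=> Hc; have := enc_range (dec c); rewrite enc_dec => Hr.
case: (ltngtP (size (dec c)) n) => // H.
- have : 2 ^ (size (dec c)).+1 <= 2 ^ n by rewrite leq_exp2l.
  have := expn_gt0 2 n; lia.
- have : 2 ^ n.+1 <= 2 ^ (size (dec c)) by rewrite leq_exp2l.
  have := expn_gt0 2 n; lia.
Qed.

Definition ctail c := c.-1./2.
Lemma ctail_enc s : ctail (enc s) = enc (behead s).
Proof. case: s => [|b s] //=; rewrite /ctail. case: b => /=; lia. Qed.
Definition cdrop k c := iter k ctail c.
Lemma cdrop_enc k s : cdrop k (enc s) = enc (drop k s).
Proof.
elim: k s => [|k IH] s; first by rewrite drop0.
by rewrite /cdrop iterSr ctail_enc -/(cdrop k _) IH; case: s => //=; rewrite drop_nil.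
Qed.
Definition ctake k c := c - 2 ^ k * cdrop k c.
Lemma ctake_enc k s : ctake k (enc s) = enc (take k s).
Proof.
rewrite /ctake cdrop_enc -{1}(cat_take_drop k s) enc_cat size_take.
case: (ltnP k (size s)) => H; first lia.
rewrite drop_oversize // take_oversize //=; lia.
Qed.
Definition ifpos (a : nat) := ifz a 0 1.
Definition eqnn a b := ifz (a - b) (ifz (b - a) 1 0) 0.
Lemma eqnnE a b : eqnn a b = (a == b).
Proof.
rewrite /eqnn; case: eqP => [->|H]; first by rewrite subnn.
case E1: (a - b) => [|x] //=; case E2: (b - a) => [|y] //=; lia.
Qed.

Lemma sum_ind c l (P : nat -> bool) :
  (forall j, j < c -> P j = (j < l)) -> l <= c -> \sum_(j < c) P j = l.
Proof.
elim: c l => [|c IH] l HP Hl; first by rewrite big_ord0; lia.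
rewrite big_ord_recr /= HP //.
case: (ltnP c l) => Hcl.
  have El : l = c.+1 by lia.
  subst l; rewrite (IH c) //; last by move=> j Hj; rewrite HP; lia.
  lia.
rewrite (IH l) //; first lia.
by move=> j Hj; apply: HP; lia.
Qed.

Definition oddn n := nrec 0 (fun _ w => 1 - w) n.
Lemma oddnE n : oddn n = odd n.
Proof. elim: n => //= n; rewrite /oddn /= => ->; by case: (odd n). Qed.
Lemma tc_oddn : tc oddn.
Proof.
have H : tc2 (fun (x n : nat) => nrec 0 (fun _ w => 1 - w) n).
  apply: (@tc2_rec (fun _ => 0) (fun _ _ w => 1 - w)); first exact: tc_const.
  rewrite /tc3; tcs2.
exact: (tc2_app H tc_id tc_id).
Qed.
#[export] Hint Resolve tc_oddn : tcdb.

Definition halfn n := bsum (fun _ i => oddn i) 0 n.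
Lemma halfnE n : halfn n = n./2.
Proof.
rewrite /halfn /bsum; elim: n => [|n IH]; first by rewrite big_ord0.
by rewrite big_ord_recr /= IH oddnE uphalf_half addnC.
Qed.
Lemma tc_halfn : tc halfn.
Proof.
have H := @tc2_bsum (fun _ i => oddn i) (ltac:(rewrite /tc2; tcs2)).
rewrite /halfn; exact: (tc2_app H (tc_const 0) tc_id).
Qed.
#[export] Hint Resolve tc_halfn : tcdb.

Lemma tc_ctail : tc ctail.
Proof. apply: (tc_ext (f := fun c => halfn c.-1)); first by move=> c; rewrite halfnE.
tcs2. Qed.
#[export] Hint Resolve tc_ctail : tcdb.
Lemma tc2_cdrop : tc2 cdrop.
Proof.
have H := tc2_iter tc_ctail.
have := tc2_app H tc_snd tc_fst. by apply: tc_ext.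
Qed.
#[export] Hint Resolve tc2_cdrop : tcdb.
Lemma tc2_ctake : tc2 ctake.
Proof. rewrite /tc2 /ctake; tcs2. Qed.
Lemma tc2_eqnn : tc2 eqnn.
Proof. rewrite /tc2 /eqnn; tcs2. Qed.
Lemma tc_ifpos : tc ifpos.
Proof. rewrite /ifpos; tcs2. Qed.
#[export] Hint Resolve tc2_ctake tc2_eqnn tc_ifpos : tcdb.

Definition clen c := bsum (fun c k => ifpos (cdrop k c)) c c.
Lemma tc_clen : tc clen.
Proof.
have H := @tc2_bsum (fun c k => ifpos (cdrop k c)) (ltac:(rewrite /tc2; tcs2)).
exact: (tc2_app H tc_id tc_id).
Qed.
#[export] Hint Resolve tc_clen : tcdb.
Lemma ifposE a : ifpos a = (a != 0). Proof. by case: a. Qed.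
Lemma clen_enc s : clen (enc s) = size s.
Proof.
rewrite /clen /bsum (eq_bigr (fun j : 'I_ _ => nat_of_bool (cdrop j (enc s) != 0))); last first.
  by move=> j _; rewrite ifposE.
apply: (@sum_ind _ _ (fun j => cdrop j (enc s) != 0)); last exact: size_enc s.
move=> j _.
rewrite cdrop_enc.
case: (ltnP j (size s)) => H.
  apply/negP => /eqP E.
  have E' : drop j s = [::] by apply: enc_inj; rewrite E.
  by move: (size_drop j s); rewrite E' /=; lia.
by rewrite drop_oversize.
Qed.

Fixpoint lead1 (s : seq bool) : nat :=
  if s is b :: s' then (if b then (lead1 s').+1 else 0) else 0.
Lemma take_ones j s : (take j.+1 s == nseq j.+1 true) = (j < lead1 s).
Proof.
elim: s j => [|b s IH] j //=.
case: b => //=; case: j => [|j] /=; first by rewrite take0.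
by rewrite eqseq_cons /= IH.
Qed.
Lemma lead1_size s : lead1 s <= size s.
Proof. elim: s => //= b s IH; case: b => //=. Qed.
Lemma enc_ones j : enc (nseq j true) = 2 ^ j.+1 - 2.
Proof. elim: j => //= j ->; rewrite !expnS; have := expn_gt0 2 j; lia. Qed.

Definition clead c := bsum (fun c j => eqnn (ctake j.+1 c) (2 ^ j.+2 - 2)) c c.
Lemma tc_clead : tc clead.
Proof.
have H := @tc2_bsum (fun c j => eqnn (ctake j.+1 c) (2 ^ j.+2 - 2)) (ltac:(rewrite /tc2; tcs2)).
exact: (tc2_app H tc_id tc_id).
Qed.
#[export] Hint Resolve tc_clead : tcdb.
Lemma clead_enc s : clead (enc s) = lead1 s.
Proof.
rewrite /clead /bsum (eq_bigr (fun j : 'I_ _ =>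
   nat_of_bool (take j.+1 s == nseq j.+1 true))); last first.
  move=> j _; rewrite eqnnE ctake_enc -enc_ones.
  by rewrite (inj_eq enc_inj).
apply: (@sum_ind _ _ (fun j => take j.+1 s == nseq j.+1 true)).
  by move=> j _; rewrite take_ones.
exact: leq_trans (lead1_size s) (size_enc s).
Qed.

Definition hdr m := nseq (size (dec m)) true ++ false :: dec m.
Definition cpm c := ctake (clead c) (cdrop (clead c).+1 c).
Definition cpr c := cdrop (clead c + clead c).+1 c.
Lemma tc_cpm : tc cpm. Proof. rewrite /cpm; tcs2. Qed.
Lemma tc_cpr : tc cpr. Proof. rewrite /cpr; tcs2. Qed.
#[export] Hint Resolve tc_cpm tc_cpr : tcdb.

Lemma lead1_hdr m r : lead1 (hdr m ++ r) = size (dec m).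
Proof. rewrite /hdr -catA; elim: (size (dec m)) => [|k IH] /=; [by [] | by rewrite IH]. Qed.
Lemma cpm_hdr m r : cpm (enc (hdr m ++ r)) = m.
Proof.
rewrite /cpm clead_enc lead1_hdr cdrop_enc ctake_enc /hdr -catA.
rewrite drop_cat size_nseq ltnNge leqnSn /= subSn // subnn /=.
by rewrite drop0 take_cat ltnn subnn take0 cats0 enc_dec.
Qed.
Lemma cpr_hdr m r : cpr (enc (hdr m ++ r)) = enc r.
Proof.
rewrite /cpr clead_enc lead1_hdr cdrop_enc /hdr -catA.
rewrite drop_cat size_nseq ltnNge.
have -> : size (dec m) <= (size (dec m) + size (dec m)).+1 by lia.
rewrite /=.
have -> : (size (dec m) + size (dec m)).+1 - size (dec m) = (size (dec m)).+1 by lia.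
by rewrite /= drop_cat ltnn subnn drop0.
Qed.
Lemma size_hdr m : size (hdr m) = (size (dec m)).*2.+1.
Proof. by rewrite /hdr size_cat size_nseq /= -addnn; lia. Qed.
Lemma size_dec_log m : size (dec m) <= trunc_log 2 m.+1.
Proof.
apply: trunc_log_max => //; have := enc_range (dec m); rewrite enc_dec.
have := expn_gt0 2 (size (dec m)); lia.
Qed.

Lemma min_exists (P : nat -> Prop) : (exists k, P k) -> exists k, P k /\ forall j, P j -> k <= j.
Proof.
move=> H.
pose Pb k := if excluded_middle_informative (P k) then true else false.
have HPb k : Pb k = true <-> P k by rewrite /Pb; case: excluded_middle_informative.
have Hex : exists k, Pb k by case: H => k Hk; exists k; apply/HPb.
case: (ex_minnP Hex) => k /HPb Hk Hmin; exists k; split=> // j /HPb; exact: Hmin.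
Qed.

Lemma KC_spec U0 u : (exists p, U0 p = Some u) ->
  (exists p, U0 p = Some u /\ size p = KC U0 u) /\
  (forall p, U0 p = Some u -> KC U0 u <= size p).
Proof.
move=> [p0 Hp0]; rewrite /KC; match goal with |- context[epsilon ?i ?P] => apply: (@epsilon_spec _ i P) end.
have [k [[p [Hp Hs]] Hmin]] := @min_exists (fun k => exists p, U0 p = Some u /\ size p = k)
  (ex_intro _ (size p0) (ex_intro _ p0 (conj Hp0 erefl))).
exists k; split; first by exists p.
by move=> q Hq; apply: Hmin; exists q.
Qed.

Lemma KCc_spec U u y : (exists p, U p y = Some u) ->
  (exists p, U p y = Some u /\ size p = KCc U u y) /\
  (forall p, U p y = Some u -> KCc U u y <= size p).
Proof.
move=> [p0 Hp0]; rewrite /KCc; match goal with |- context[epsilon ?i ?P] => apply: (@epsilon_spec _ i P) end.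
have [k [[p [Hp Hs]] Hmin]] := @min_exists (fun k => exists p, U p y = Some u /\ size p = k)
  (ex_intro _ (size p0) (ex_intro _ p0 (conj Hp0 erefl))).
exists k; split; first by exists p.
by move=> q Hq; apply: Hmin; exists q.
Qed.

Lemma univ_some U0 u : universal_machine U0 -> exists p, U0 p = Some u.
Proof.
case=> _ /(_ _ id_computable1) [c Hc].
by case: (Hc u u erefl) => q [Hq _]; exists q.
Qed.
Lemma univc_some U u y : universal_cond_machine U -> exists p, U p y = Some u.
Proof.
case=> _ /(_ _ id_computable2) [c Hc].
by case: (Hc u y u erefl) => q [Hq _]; exists q.
Qed.

Lemma univ_bound U0 V : universal_machine U0 -> computable1 V ->
  exists c, forall p x, V p = Some x -> KC U0 x <= size p + c.
Proof.
move=> HU HV; case: (HU) => _ /(_ _ HV) [c Hc]; exists c => p x Hx.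
case: (Hc _ _ Hx) => q [Hq Hs].
have [_ Hm] := KC_spec (ex_intro _ q Hq).
exact: leq_trans (Hm _ Hq) Hs.
Qed.
Lemma univc_bound U V : universal_cond_machine U -> computable2 V ->
  exists c, forall p y x, V p y = Some x -> KCc U x y <= size p + c.
Proof.
move=> HU HV; case: (HU) => _ /(_ _ HV) [c Hc]; exists c => p y x Hx.
case: (Hc _ _ _ Hx) => q [Hq Hs].
have [_ Hm] := KCc_spec (ex_intro _ q Hq).
exact: leq_trans (Hm _ Hq) Hs.
Qed.

Lemma KC_upper U0 : universal_machine U0 -> exists c, forall u, KC U0 u <= size u + c.
Proof.
move=> HU; case: (univ_bound HU id_computable1) => c Hc; exists c => u.
exact: Hc.
Qed.

Definition Plow c cx := ctake (cpm c) cx + 2 ^ (clen (ctake (cpm c) cx)) * cpr c.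
Lemma tc2_Plow : tc2 Plow.
Proof. rewrite /tc2 /Plow; tcs2. Qed.

Lemma Plow_enc m r x : Plow (enc (hdr m ++ r)) (enc x) = enc (take m x ++ r).
Proof. by rewrite /Plow cpm_hdr cpr_hdr ctake_enc clen_enc enc_cat. Qed.

Lemma lower_machine U0 U : universal_machine U0 -> universal_cond_machine U ->
  exists c1, forall u p x m, U0 p = Some u -> m <= size p -> take m x = take m p ->
    KCc U u x <= size (hdr m) + (size p - m) + c1.
Proof.
move=> HU0 HU.
have HV := comp2_computable (proj1 HU0) tc2_Plow.
case: (univc_bound HU HV) => c Hc; exists c => u p x m Hp Hm Hx.
have := Hc (hdr m ++ drop m p) x u.
rewrite Plow_enc dec_enc Hx cat_take_drop size_cat size_drop => H.
by apply: H.
Qed.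

Definition bmin (F : nat -> nat -> nat) a N :=
  bsum (fun b y => ifz (bsum F b y.+1) 1 0) a N.
Lemma tc2_bmin F : tc2 F -> tc2 (fun a N => bmin F a N).
Proof.
move=> HF; have H1 := tc2_bsum HF.
have H2 : tc2 (fun b y => ifz (bsum F b y.+1) 1 0) by rewrite /tc2; tcs2.
exact: tc2_bsum H2.
Qed.
Lemma bminE F a N k : k < N -> F a k != 0 -> (forall j, j < k -> F a j = 0) -> bmin F a N = k.
Proof.
move=> HkN Hk Hj; rewrite /bmin /bsum.
rewrite (eq_bigr (fun y : 'I_N => nat_of_bool (y < k))); first by apply: (@sum_ind N k (fun y => y < k)) => //; lia.
move=> y _; rewrite /bsum; case: (ltnP y k) => Hy.
  by rewrite big1 // => j _; apply: Hj; have := ltn_ord j; lia.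
have Hky : k < y.+1 by lia.
rewrite (bigD1 (Ordinal Hky)) //=.
by case: (F a k) Hk.
Qed.

Definition Nn pr := 2 ^ pfst pr.
Definition Ap (A : nat -> nat -> nat -> nat) pr s y := ifz s 0 (A pr s.-1 y).
Definition szA A pr s := bsum (fun a y => Ap A (pfst a) (psnd a) y) (npair pr s) (Nn pr).
Definition newA A pr s y := Ap A pr s y * (1 - Ap A pr s.-1 y).
Definition cntnew A pr s y := bsum (fun a y' => newA A (pfst a) (psnd a) y') (npair pr s) y.+1.
Definition selA A pr s j :=
  bmin (fun b y => cntnew A (pfst (pfst b)) (psnd (pfst b)) y - psnd b)
       (npair (npair pr s) j) (Nn pr).

Lemma tc_Nn : tc Nn. Proof. rewrite /Nn; tcs2. Qed.
#[export] Hint Resolve tc_Nn : tcdb.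

Lemma tc_selA A : tc3 A -> tc3 (selA A).
Proof.
move=> HA.
have HAp : tc3 (Ap A) by rewrite /tc3 /Ap; tcs2.
have HnewA : tc3 (newA A) by rewrite /tc3 /newA /Ap; tcs2.
have Hc : tc3 (cntnew A).
  have H := @tc2_bsum (fun a y' => newA A (pfst a) (psnd a) y') (ltac:(rewrite /tc2; tcs2)).
  rewrite /tc3 /cntnew; tcs2.
have H := @tc2_bmin (fun b y => cntnew A (pfst (pfst b)) (psnd (pfst b)) y - psnd b) (ltac:(rewrite /tc2; tcs2)).
rewrite /tc3 /selA; tcs2.
Qed.
Lemma tc_szA A : tc3 A -> tc2 (szA A).
Proof.
move=> HA.
have HAp : tc3 (Ap A) by rewrite /tc3 /Ap; tcs2.
have H := @tc2_bsum (fun a y => Ap A (pfst a) (psnd a) y) (ltac:(rewrite /tc2; tcs2)).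
rewrite /tc2 /szA; tcs2.
Qed.

Lemma psum_mono (f : nat -> nat) a b : a <= b -> \sum_(i < a) f i <= \sum_(i < b) f i.
Proof.
elim: b => [|b IH] Hab; first by have -> : a = 0 by lia.
rewrite big_ord_recr /=; case: (ltnP a b.+1) => H.
  by apply: leq_trans (IH _) (leq_addr _ _); lia.
have -> : a = b.+1 by lia.
by rewrite big_ord_recr.
Qed.
Lemma psumS (f : nat -> nat) a : \sum_(i < a.+1) f i = \sum_(i < a) f i + f a.
Proof. by rewrite big_ord_recr. Qed.

Lemma szAE A pr s : szA A pr s = \sum_(y < Nn pr) Ap A pr s y.
Proof. by rewrite /szA /bsum; apply: eq_bigr => y _; rewrite pfst_pair psnd_pair. Qed.
Lemma cntnewE A pr s y : cntnew A pr s y = \sum_(y' < y.+1) newA A pr s y'.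
Proof. by rewrite /cntnew /bsum; apply: eq_bigr => y' _; rewrite pfst_pair psnd_pair. Qed.

Lemma decode_ok A pr u s0 (B : nat -> bool) :
  (forall s y, A pr s y <= 1) -> (forall s y, A pr s y <= A pr s.+1 y) ->
  u < Nn pr -> A pr s0 u = 1 -> (forall s y, A pr s y = 1 -> B y) ->
  exists i, i < \sum_(y < Nn pr) B y /\ (exists s, i < szA A pr s) /\
   forall s, i < szA A pr s -> (forall s', s' < s -> szA A pr s' <= i) ->
     selA A pr s (i - szA A pr s.-1) = u.
Proof.
move=> H01 Hmono Hu Hs0 HB.
pose ap s y := Ap A pr s y.
have ap01 s y : ap s y <= 1 by rewrite /ap /Ap; case: s => //= s; apply: H01.
have apmono s s' y : s <= s' -> ap s y <= ap s' y.
  move=> Hss; elim: s' Hss => [|s' IH] Hss; first by have -> : s = 0 by lia.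
  case: (ltnP s s'.+1) => H; last by have -> : s = s'.+1 by lia.
  apply: leq_trans (IH _) _; first lia.
  rewrite /ap /Ap; case: s' {IH H Hss} => //= s'; exact: Hmono.
have split s y : Ap A pr s y = Ap A pr s.-1 y + newA A pr s y.
  rewrite /newA -/(ap s y) -/(ap s.-1 y).
  have := ap01 s y; have := ap01 s.-1 y; have := apmono s.-1 s y (leq_pred s).
  case: (ap s y) => [|[|?]]; case: (ap s.-1 y) => [|[|?]] //=; lia.
have szsplit s : szA A pr s = szA A pr s.-1 + \sum_(y < Nn pr) newA A pr s y.
  by rewrite !szAE -big_split /=; apply: eq_bigr => y _; rewrite {1}split.
have szmono s s' : s <= s' -> szA A pr s <= szA A pr s'.
  by move=> H; rewrite !szAE; apply: leq_sum => y _; apply: apmono.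
have Hex : exists s, ap s u == 1.
  by exists s0.+1; rewrite /ap /Ap /= Hs0.
case: (ex_minnP Hex) => su /eqP Hsu Hmin.
have su0 : 0 < su by case: su Hsu {Hmin}.
have Hprev : ap su.-1 u = 0.
  have := ap01 su.-1 u; case E: (ap su.-1 u) => [|[|?]] //= _.
  have := Hmin _ (introT eqP E); lia.
have Hnew : newA A pr su u = 1 by have := split su u; rewrite -/(ap su u) -/(ap su.-1 u) Hsu Hprev.
pose j := \sum_(y < u) newA A pr su y.
exists (szA A pr su.-1 + j).
have Hlt : szA A pr su.-1 + j < szA A pr su.
  rewrite (szsplit su) ltn_add2l /j.
  apply: leq_trans (psum_mono _ Hu); rewrite psumS Hnew; lia.
split; last split.
- apply: leq_trans Hlt _; rewrite szAE; apply: leq_sum => y _.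
  rewrite -/(ap su y) /ap /Ap; case: su {Hsu Hmin su0 Hprev Hnew j} => // s /=.
  have := H01 s y; case E: (A pr s y) => [|[|?]] //= _.
  by rewrite (HB _ _ E).
- by exists su.
- move=> s Hs Hsmin.
  have Es : s = su.
    apply/eqP; rewrite eqn_leq; apply/andP; split.
      rewrite leqNgt; apply/negP => Hgt; have := Hsmin _ Hgt; lia.
    rewrite leqNgt; apply/negP => Hlt'.
    have := szmono _ _ (leq_pred s); have := szmono s su.-1 (ltac:(lia)); lia.
  subst s; rewrite addKn /selA.
  apply: bminE => //.
  + rewrite pfst_pair psnd_pair !pfst_pair !psnd_pair cntnewE psumS Hnew.
    by rewrite /j; lia.
  + move=> y Hy; rewrite pfst_pair psnd_pair !pfst_pair !psnd_pair cntnewE.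
    have := @psum_mono (fun y' => newA A pr su y') y.+1 u Hy; rewrite /j /=; lia.
Qed.

#[export] Hint Resolve tc2_bev : tcdb.

Definition hitF eU a p :=
  eqnn (bev eU (npair p (2 ^ pfst (pfst (pfst a)) - 1 + psnd (psnd a))) (psnd (pfst a)))
       (2 ^ pfst (pfst (pfst a)) + pfst (psnd a)).
Definition hitP eU a := ifpos (bsum (hitF eU) a (2 ^ (pfst (psnd (pfst (pfst a)))).+1 - 1)).
Definition cntU eU pr s y :=
  bsum (fun b x => hitP eU (npair (pfst b) (npair (psnd b) x))) (npair (npair pr s) y) (Nn pr).
Definition AU eU pr s y := ifz (2 ^ (psnd (psnd pr)) - cntU eU pr s y) 1 0.

Lemma tc3_AU eU : tc3 (AU eU).
Proof.
have H1 : tc2 (hitF eU) by rewrite /tc2 /hitF; tcs2.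
have H2 := tc2_bsum H1.
have H3 : tc (hitP eU) by rewrite /hitP; tcs2.
have H4 := @tc2_bsum (fun b x => hitP eU (npair (pfst b) (npair (psnd b) x)))
   (ltac:(rewrite /tc2; tcs2)).
rewrite /tc3 /AU /cntU; tcs2.
Qed.

Definition dn c := cpm c.
Definition dt c := cpm (cpr c).
Definition dib c := cpr (cpr c).
Definition dL c := clen (dib c).
Definition di c := dib c - (2 ^ dL c - 1).
Definition dm c := dL c + dt c - dn c - 1.
Definition dpr c := npair (dn c) (npair (dm c) (dt c)).
Definition GU eU c s := (di c).+1 - szA (AU eU) (dpr c) s.
Definition HU eU c s := 2 ^ dn c - 1 + selA (AU eU) (dpr c) s (di c - szA (AU eU) (dpr c) s.-1).

Lemma tc_dpr : tc dpr.
Proof. rewrite /dpr /dn /dm /dL /dt /dib; tcs2. Qed.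
Lemma tc_di : tc di.
Proof. rewrite /di /dL /dib; tcs2. Qed.
Lemma tc_dn : tc dn.
Proof. rewrite /dn; tcs2. Qed.
#[export] Hint Resolve tc_dpr tc_di tc_dn : tcdb.

Lemma D_computable eU : computable1 (srch (GU eU) (HU eU)).
Proof.
apply: srch_computable.
- have := tc_szA (tc3_AU eU); rewrite /tc2 /GU => H; tcs2.
- have := tc_szA (tc3_AU eU); have := tc_selA (tc3_AU eU).
  rewrite /tc2 /HU => H1 H2; tcs2.
Qed.

Lemma sum_count (P : nat -> bool) N : \sum_(i < N) P i = count P (iota 0 N).
Proof.
elim: N => [|N IH]; first by rewrite big_ord0.
have E : iota 0 N.+1 = iota 0 N ++ [:: N] by rewrite -addn1 iotaD.
by rewrite big_ord_recr IH E count_cat /= addn0.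
Qed.
Lemma sum_posE (f : nat -> nat) N : (0 < \sum_(i < N) f i) <-> exists i, i < N /\ 0 < f i.
Proof.
elim: N => [|N IH]; first by rewrite big_ord0; split=> // [[i []]].
rewrite big_ord_recr /= addn_gt0; split.
  case/orP => [/IH [i [Hi Hf]]|Hf]; [exists i; split=> //; lia | by exists N].
case=> i [Hi Hf]; apply/orP.
case: (ltnP i N) => H; first by left; apply/IH; exists i.
by right; have -> : N = i by lia.
Qed.

Definition strn n y := dec (2 ^ n - 1 + y).
Lemma enc_strn n y : enc (strn n y) = 2 ^ n - 1 + y.
Proof. exact: enc_dec. Qed.
Lemma size_strn n y : y < 2 ^ n -> size (strn n y) = n.
Proof. move=> Hy; apply: size_dec_range; rewrite expnS; have := expn_gt0 2 n; lia. Qed.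
Lemma strn_inj n y1 y2 : strn n y1 = strn n y2 -> y1 = y2.
Proof. by move=> /(congr1 enc); rewrite !enc_strn; have := expn_gt0 2 n; lia. Qed.

Lemma size_lt_code p m : p < 2 ^ m.+1 - 1 -> size (dec p) <= m.
Proof.
move=> Hp; have := enc_range (dec p); rewrite enc_dec => H.
rewrite leqNgt; apply/negP => Hs.
have : 2 ^ m.+1 <= 2 ^ size (dec p) by rewrite leq_exp2l.
lia.
Qed.
Lemma code_lt_size p m : size p <= m -> enc p < 2 ^ m.+1 - 1.
Proof.
move=> Hp; have := enc_range p => H.
have : 2 ^ (size p).+1 <= 2 ^ m.+1 by rewrite leq_exp2l.
lia.
Qed.

Definition prU n m0 t := npair n (npair m0 t).

Lemma hitP_E eU n m0 t s y x :
  hitP eU (npair (npair (prU n m0 t) s) (npair y x)) =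
  (0 < \sum_(p < 2 ^ m0.+1 - 1) (bev eU (npair p (2 ^ n - 1 + x)) s == 2 ^ n + y)).
Proof.
rewrite /hitP /bsum /prU !(pfst_pair, psnd_pair) ifposE lt0n.
congr (_ != 0); apply: eq_bigr => p _.
by rewrite /hitF !(pfst_pair, psnd_pair) eqnnE.
Qed.

Definition realizes2 eU (U : seq bool -> seq bool -> option (seq bool)) :=
  forall p y v, eval eU (npair (enc p) (enc y)) v <-> exists x, U p y = Some x /\ v = enc x.

Lemma hit_sound eU U n m0 t s y x : realizes2 eU U ->
  hitP eU (npair (npair (prU n m0 t) s) (npair y x)) != 0 ->
  KCc U (strn n y) (strn n x) <= m0.
Proof.
move=> HeU; rewrite hitP_E; case: (0 < _) / idP => //=.
move/(sum_posE (fun p => nat_of_bool (bev eU (npair p (2 ^ n - 1 + x)) s == 2 ^ n + y))) => [p [Hp Hb]] _.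
move: Hb; rewrite lt0b => /eqP Hb.
have Hb' : bev eU (npair p (2 ^ n - 1 + x)) s = (2 ^ n - 1 + y).+1.
  by rewrite Hb; have := expn_gt0 2 n; lia.
have := bev_sound Hb'.
rewrite -(enc_dec p) -(enc_strn n x) -(enc_strn n y) HeU => [[v [Hv Ev]]].
have Evy : v = strn n y by apply: enc_inj.
subst v.
have [_ Hm] := KCc_spec (ex_intro _ (dec p) Hv).
apply: leq_trans (Hm _ Hv) _.
exact: size_lt_code.
Qed.

Lemma hit_complete eU U n m0 t y x : realizes2 eU U -> universal_cond_machine U ->
  KCc U (strn n y) (strn n x) <= m0 ->
  exists s, forall s', s <= s' -> hitP eU (npair (npair (prU n m0 t) s') (npair y x)) != 0.
Proof.
move=> HeU HU Hk.
have [[p [Hp Hs]] _] := KCc_spec (univc_some (strn n y) (strn n x) HU).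
have : eval eU (npair (enc p) (enc (strn n x))) (enc (strn n y)) by apply/HeU; eauto.
case/bev_complete => s Hev; exists s => s' Hss.
rewrite hitP_E.
suff -> : (0 < \sum_(p < 2 ^ m0.+1 - 1) (bev eU (npair p (2 ^ n - 1 + x)) s' == 2 ^ n + y)) by [].
apply/(sum_posE (fun p => nat_of_bool (bev eU (npair p (2 ^ n - 1 + x)) s' == 2 ^ n + y))).
exists (enc p); split; first by apply: code_lt_size; rewrite Hs.
rewrite lt0b -(enc_strn n x) (bev_mono Hss Hev) enc_strn.
apply/eqP; have := expn_gt0 2 n; lia.
Qed.

Lemma cntU_E eU n m0 t s y : cntU eU (prU n m0 t) s y =
  \sum_(x < 2 ^ n) hitP eU (npair (npair (prU n m0 t) s) (npair y x)).
Proof. by rewrite /cntU /bsum /Nn /prU !(pfst_pair, psnd_pair). Qed.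
Lemma AU_E eU n m0 t s y : AU eU (prU n m0 t) s y = (2 ^ t <= cntU eU (prU n m0 t) s y).
Proof.
rewrite /AU {1}/prU !(pfst_pair, psnd_pair).
by rewrite -subn_eq0; case: (2 ^ t - _).
Qed.

Lemma hitP_mono eU n m0 t s s' y x : s <= s' ->
  hitP eU (npair (npair (prU n m0 t) s) (npair y x)) <=
  hitP eU (npair (npair (prU n m0 t) s') (npair y x)).
Proof.
move=> Hss; rewrite !hitP_E.
case: (0 < \sum_(p < _) _) / idP => // /(sum_posE (fun p => nat_of_bool (bev eU (npair p (2 ^ n - 1 + x)) s == 2 ^ n + y))) [p [Hp Hb]].
suff -> : (0 < \sum_(p < 2 ^ m0.+1 - 1) (bev eU (npair p (2 ^ n - 1 + x)) s' == 2 ^ n + y)) by [].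
apply/(sum_posE (fun p => nat_of_bool (bev eU (npair p (2 ^ n - 1 + x)) s' == 2 ^ n + y))).
exists p; split=> //; move: Hb; rewrite !lt0b => /eqP Hb.
have Hb' : bev eU (npair p (2 ^ n - 1 + x)) s = (2 ^ n + y).-1.+1.
  by rewrite Hb; have := expn_gt0 2 n; lia.
by rewrite (bev_mono Hss Hb') prednK // ltn_addr // expn_gt0.
Qed.

Lemma hitP01 eU a : hitP eU a <= 1.
Proof. by rewrite /hitP; case: (bsum _ _ _). Qed.

Definition Scnt U n m0 y := \sum_(x < 2 ^ n) (KCc U (strn n y) (strn n x) <= m0).

Lemma AU_B eU U n m0 t s y : realizes2 eU U ->
  AU eU (prU n m0 t) s y = 1 -> 2 ^ t <= Scnt U n m0 y.
Proof.
move=> HeU; rewrite AU_E; case: (2 ^ t <= _) / idP => //= H _.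
apply: leq_trans H _; rewrite cntU_E /Scnt; apply: leq_sum => x _.
have := hitP01 eU (npair (npair (prU n m0 t) s) (npair y x)).
case E: (hitP _ _) => [|[|?]] //= _.
by rewrite (@hit_sound eU U n m0 t s y x HeU) //; rewrite E.
Qed.

Lemma AU_from eU U n m0 t y : realizes2 eU U -> universal_cond_machine U ->
  2 ^ t <= Scnt U n m0 y -> exists s, AU eU (prU n m0 t) s y = 1.
Proof.
move=> HeU HU H.
have [T HT] : exists T, forall x, x < 2 ^ n ->
    (KCc U (strn n y) (strn n x) <= m0 -> hitP eU (npair (npair (prU n m0 t) T) (npair y x)) != 0).
  apply: uniform_fuel.
    move=> x s s' Hss Hq Hk; have := Hq Hk; have := @hitP_mono eU n m0 t s s' y x Hss; lia.
  move=> x _; case: (KCc U (strn n y) (strn n x) <= m0) / idP => Hk.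
    case: (hit_complete t HeU HU Hk) => s Hs; exists s => _; exact: Hs.
  by exists 0.
exists T; rewrite AU_E; apply/eqP; rewrite eqb1.
apply: leq_trans H _; rewrite cntU_E /Scnt; apply: leq_sum => x _.
case: (KCc U _ _ <= m0) / idP => //= Hk.
by have := HT x (ltn_ord x) Hk; case: (hitP _ _).
Qed.

Lemma perx_bound U n m0 w : universal_cond_machine U ->
  \sum_(y < 2 ^ n) (KCc U (strn n y) w <= m0) <= 2 ^ m0.+1 - 1.
Proof.
move=> HU.
pose P := fun y => KCc U (strn n y) w <= m0.
rewrite (sum_count P) -size_filter.
pose f := fun y => epsilon (inhabits [::]) (fun p => U p w = Some (strn n y) /\ size p <= m0).
have Hf y : P y -> U (f y) w = Some (strn n y) /\ size (f y) <= m0.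
  move=> Py; rewrite /f.
  match goal with |- context[epsilon ?i ?Q] => apply: (@epsilon_spec _ i Q) end.
  have [[p [Hp Hs]] _] := KCc_spec (univc_some (strn n y) w HU).
  by exists p; split=> //; rewrite Hs.
rewrite -(size_map f).
rewrite -[X in _ <= X](size_iota 0 (2 ^ m0.+1 - 1)) -(size_map dec).
apply: uniq_leq_size.
  rewrite map_inj_in_uniq ?filter_uniq ?iota_uniq //.
  move=> y1 y2; rewrite !mem_filter => /andP [P1 _] /andP [P2 _] E.
  have := (Hf _ P1).1; rewrite E (Hf _ P2).1 => -[] /strn_inj ->. done.
move=> p /mapP [y]; rewrite mem_filter => /andP [Py _] ->.
apply/mapP; exists (enc (f y)); last by rewrite dec_enc.
by rewrite mem_iota add0n code_lt_size // (Hf _ Py).2.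
Qed.

Lemma total_bound U n m0 t : universal_cond_machine U ->
  (\sum_(y < 2 ^ n) (2 ^ t <= Scnt U n m0 y)) * 2 ^ t <= 2 ^ n * (2 ^ m0.+1 - 1).
Proof.
move=> HU; rewrite big_distrl /=.
apply: (@leq_trans (\sum_(y < 2 ^ n) Scnt U n m0 y)).
  by apply: leq_sum => y _; case: (2 ^ t <= _) / idP => //=; rewrite mul1n.
rewrite /Scnt exchange_big /=.
apply: (@leq_trans (\sum_(x < 2 ^ n) (2 ^ m0.+1 - 1))).
  by apply: leq_sum => x _; apply: perx_bound.
by rewrite sum_nat_const card_ord.
Qed.

Lemma srch_spec G H q u (Q : nat -> Prop) :
  (forall s, G (enc q) s = 0 <-> Q s) -> (exists s, Q s) ->
  (forall s, Q s -> (forall s', s' < s -> ~ Q s') -> dec (H (enc q) s) = u) ->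
  srch G H q = Some u.
Proof.
move=> HG [s0 Hs0] HH; rewrite /srch.
case: excluded_middle_informative => [h|[]]; last by exists s0; apply/eqP/HG.
case: ex_minnP => m /eqP Gm Hmin; congr Some; apply: HH; first exact/HG.
move=> s' Hs' /HG /eqP /Hmin; lia.
Qed.

Lemma decode_params n t L i :
  i < 2 ^ L ->
  let c := enc (hdr n ++ hdr t ++ dec (2 ^ L - 1 + i)) in
  dn c = n /\ di c = i /\ dpr c = prU n (L + t - n - 1) t.
Proof.
move=> Hi c.
have Hs : size (dec (2 ^ L - 1 + i)) = L by apply: size_dec_range; rewrite expnS; have := expn_gt0 2 L; lia.
have E1 : dn c = n by rewrite /dn /c cpm_hdr.
have E2 : cpr c = enc (hdr t ++ dec (2 ^ L - 1 + i)) by rewrite /c cpr_hdr.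
have E3 : dt c = t by rewrite /dt E2 cpm_hdr.
have E4 : dib c = 2 ^ L - 1 + i by rewrite /dib E2 cpr_hdr enc_dec.
have E5 : dL c = L by rewrite /dL E4 -{1}(enc_dec (2 ^ L - 1 + i)) clen_enc Hs.
have E6 : di c = i by rewrite /di E4 E5; lia.
split=> //; split=> //.
by rewrite /dpr /dm E1 E3 E5 /prU.
Qed.

Lemma upper_core U0 U : universal_machine U0 -> universal_cond_machine U ->
  exists c2, forall n m0 t u, size u = n -> t <= n + m0 ->
    2 ^ t <= \sum_(x < 2 ^ n) (KCc U u (strn n x) <= m0) ->
    KC U0 u <= size (hdr n) + size (hdr t) + (n + m0 + 1 - t) + c2.
Proof.
move=> HU0 HUc.
case: (HUc) => [[eU HeU] _].
have HD := D_computable eU.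
case: (univ_bound HU0 HD) => c2 Hc2; exists c2 => n m0 t u Hsize Ht Hcnt.
pose yu := enc u - (2 ^ n - 1).
have Hyu : u = strn n yu.
  apply: enc_inj; rewrite enc_strn /yu; have := enc_range u; rewrite Hsize; lia.
have Hyun : yu < 2 ^ n by rewrite /yu; have := enc_range u; rewrite Hsize expnS; lia.
set pr := prU n m0 t.
have HS : 2 ^ t <= Scnt U n m0 yu by rewrite /Scnt -Hyu.
case: (AU_from HeU HUc HS) => s0 Hs0.
have H01 s y : AU eU pr s y <= 1 by rewrite /AU; case: (_ - _).
have Hmono s y : AU eU pr s y <= AU eU pr s.+1 y.
  rewrite !AU_E; case: (2 ^ t <= cntU eU pr s y) / idP => //= H.
  suff -> : 2 ^ t <= cntU eU pr s.+1 y by [].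
  apply: leq_trans H _; rewrite !cntU_E; apply: leq_sum => x _.
  exact: hitP_mono.
have HNn : Nn pr = 2 ^ n by rewrite /Nn /pr /prU pfst_pair.
have [i [HiB [Hex Hsel]]] := @decode_ok (AU eU) pr yu s0 (fun y => 2 ^ t <= Scnt U n m0 y)
   H01 Hmono (ltac:(by rewrite HNn)) Hs0 (fun s y H => AU_B HeU H).
rewrite HNn in HiB.
set L := n + m0 + 1 - t.
have HiL : i < 2 ^ L.
  have Htb := total_bound n m0 t HUc.
  have E : 2 ^ n * 2 ^ m0.+1 = 2 ^ L * 2 ^ t by rewrite -!expnD /L; congr (2 ^ _); lia.
  apply: leq_trans HiB _.
  rewrite -(leq_pmul2r (expn_gt0 2 t)) -E.
  apply: leq_trans Htb _.
  by rewrite leq_mul2l leq_subr orbT.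
have [Edn [Edi Edpr]] := decode_params n t HiL.
have EL : L + t - n - 1 = m0 by rewrite /L; lia.
rewrite EL -/pr in Edpr.
set q := hdr n ++ hdr t ++ dec (2 ^ L - 1 + i).
have Hq : srch (GU eU) (HU eU) q = Some u.
  apply: (@srch_spec _ _ q u (fun s => i < szA (AU eU) pr s)).
  - by move=> s; rewrite /GU Edi Edpr; split; [move/eqP; rewrite subn_eq0 | move=> H; apply/eqP; rewrite subn_eq0].
  - exact: Hex.
  - move=> s Hs Hmin; rewrite /HU Edn Edi Edpr Hsel //.
    by move=> s' Hs'; rewrite leqNgt; apply/negP; apply: Hmin.
have := Hc2 _ _ Hq.
rewrite /q !size_cat.
have -> : size (dec (2 ^ L - 1 + i)) = L by apply: size_dec_range; rewrite expnS; have := expn_gt0 2 L; lia.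
lia.
Qed.

Lemma strn_enc n s : size s = n -> strn n (enc s - (2 ^ n - 1)) = s.
Proof.
move=> Hs; apply: enc_inj; rewrite enc_strn; have := enc_range s; rewrite Hs; lia.
Qed.
Lemma strn_lt n s : size s = n -> enc s - (2 ^ n - 1) < 2 ^ n.
Proof. move=> Hs; have := enc_range s; rewrite Hs expnS; lia. Qed.

Lemma card_tuple_sum n (P : seq bool -> bool) :
  #|[set x : n.-tuple bool | P x]| = \sum_(y < 2 ^ n) P (strn n y).
Proof.
rewrite (sum_count (fun y => P (strn n y))) -(count_map (strn n)) -size_filter.
rewrite cardE -(size_map val).
apply: perm_size; apply: uniq_perm.
- by rewrite map_inj_uniq ?enum_uniq //; apply: val_inj.
- rewrite filter_uniq // map_inj_in_uniq ?iota_uniq //.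
  by move=> y1 y2 _ _; apply: strn_inj.
- move=> s; rewrite mem_filter; apply/mapP/andP.
  + case=> x; rewrite mem_enum inE => Px ->; split=> //.
    apply/mapP; exists (enc x - (2 ^ n - 1)); first by rewrite mem_iota add0n strn_lt ?size_tuple.
    by rewrite strn_enc ?size_tuple.
  + case=> Ps /mapP [y]; rewrite mem_iota add0n => Hy Es.
    have Hsz : size s == n by rewrite Es size_strn.
    exists (Tuple Hsz) => //.
    by rewrite mem_enum inE.
Qed.

Lemma d_alpha_E U0 U n alpha u : alpha <= KC U0 u ->
  d_alpha U0 U n alpha u = \sum_(y < 2 ^ n) (KCc U u (strn n y) <= KC U0 u - alpha).
Proof.
move=> Ha; rewrite /d_alpha.
rewrite -(card_tuple_sum n (fun x => KCc U u x <= KC U0 u - alpha)).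
apply: eq_card => x; rewrite !inE.
have -> : KCc U u (\val x) = KCc U u x by [].
apply/idP/idP.
- by move/ZArith.Zbool.Zle_bool_imp_le => H; apply/leP; lia.
- by move/leP => H; apply: ZArith.Zbool.Zle_imp_le_bool; lia.
Qed.

Lemma prefix_count n (pre : seq bool) (Q : seq bool -> bool) :
  size pre <= n ->
  (forall x, size x = n -> take (size pre) x = pre -> Q x) ->
  2 ^ (n - size pre) <= \sum_(y < 2 ^ n) Q (strn n y).
Proof.
move=> Hpre HQ.
rewrite -card_tuple_sum.
pose u0 := [tuple of nseq n false].
pose f := fun w : (n - size pre).-tuple bool => (insubd u0 (pre ++ w) : n.-tuple bool).
have Hsz (w : (n - size pre).-tuple bool) : size (pre ++ val w) == n.
  change (size (pre ++ tval w) == n); rewrite size_cat size_tuple; apply/eqP; lia.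
have Hf (w : (n - size pre).-tuple bool) : val (f w) = pre ++ val w by rewrite /f val_insubd Hsz.
have finj : injective f.
  move=> w1 w2 E; apply: val_inj; have := congr1 val E; rewrite !Hf.
  by move/eqP; rewrite eqseq_cat // => /andP [_ /eqP].
have := card_imset [set: (n - size pre).-tuple bool] finj.
rewrite cardsT card_tuple card_bool => <-.
apply: subset_leq_card; apply/subsetP => x /imsetP [w _ ->].
rewrite inE; apply: HQ; first by rewrite size_tuple.
by rewrite Hf take_size_cat.
Qed.

Lemma hdr_size_bound m n : 0 < n -> m < n.*2 -> size (hdr m) <= (trunc_log 2 n).*2 + 3.
Proof.
move=> Hn Hm; rewrite size_hdr.
have := size_dec_log m.
have : trunc_log 2 m.+1 <= trunc_log 2 n.*2 by apply: leq_trunc_log.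
rewrite trunc_log2_double //; lia.
Qed.

Lemma main_nat U0 U : universal_machine U0 -> universal_cond_machine U ->
  exists L0, forall n, 2 ^ L0 <= n -> forall alpha u, size u = n ->
    alpha + 12 * trunc_log 2 n <= KC U0 u ->
    let d := d_alpha U0 U n alpha u in
    alpha <= n /\
    (exists j, j <= 12 * trunc_log 2 n + 1 /\ alpha + j <= n /\ 2 ^ (n - (alpha + j)) <= d) /\
    d < 2 ^ (n - alpha + 5 * trunc_log 2 n).
Proof.
move=> HU0 HU.
case: (KC_upper HU0) => c0 Hc0.
case: (lower_machine HU0 HU) => c1 Hc1.
case: (upper_core HU0 HU) => c2 Hc2.
exists (20 + c0 + c1 + c2) => n Hn alpha u Hu Hk d.
set l := trunc_log 2 n.
have Hn0 : 0 < n by apply: leq_trans Hn; rewrite expn_gt0.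
have Hl : 20 + c0 + c1 + c2 <= l by rewrite /l; apply: trunc_log_max.
have H2l : 2 ^ l <= n by apply: trunc_logP.
have Hku : KC U0 u <= n + c0 by rewrite -Hu; apply: Hc0.
have Han : alpha <= n by lia.
have Hka : alpha <= KC U0 u by lia.
have Hd : d = \sum_(y < 2 ^ n) (KCc U u (strn n y) <= KC U0 u - alpha) by rewrite /d d_alpha_E.
split=> //; split.
-
  set j := l.*2 + 3 + c1.
  exists j; split; first by rewrite /j; lia.
  have Hjn : alpha + j <= n by rewrite /j; lia.
  split=> //.
  have [[p [Hp Hps]] _] := KC_spec (univ_some u HU0).
  set m := alpha + j.
  have Hmp : m <= size p by rewrite Hps /m /j; lia.
  rewrite Hd.
  have Hpre : size (take m p) = m by rewrite size_take; case: ltnP => //; lia.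
  have HPC := @prefix_count n (take m p) (fun x => KCc U u x <= KC U0 u - alpha).
  rewrite Hpre in HPC; apply: HPC => //.
  move=> x Hx Htx.
  have Hhdr : size (hdr m) <= l.*2 + 3 by apply: hdr_size_bound => //; lia.
  have := Hc1 u p x m Hp Hmp Htx.
  rewrite Hps; lia.
-
  set t := n - alpha + 5 * l.
  rewrite ltnNge; apply/negP => Hdt.
  have Ht : t <= n + (KC U0 u - alpha) by rewrite /t; lia.
  have := Hc2 n (KC U0 u - alpha) t u Hu Ht.
  rewrite -Hd => /(_ Hdt) H.
  have H1 : size (hdr n) <= l.*2 + 3 by apply: hdr_size_bound => //; lia.
  have Hln : l < n by apply: leq_trans (ltn_expl l (ltnSn 1)) H2l.
  have Hl4 : t < (n.*2).*2 by rewrite /t; lia.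
  have H2 : size (hdr t) <= l.*2 + 5.
    have := @hdr_size_bound t n.*2 (ltac:(lia)) Hl4.
    by rewrite trunc_log2_double //; lia.
  lia.
Qed.

Local Open Scope R_scope.

Lemma INR_exp2 (a : nat) : INR (2 ^ a)%N = 2 ^ a.
Proof.
elim: a => [|a IH]; first by rewrite expn0 /=.
by rewrite expnS -multE mult_INR IH /=.
Qed.

Lemma INR_leq (a b : nat) : (a <= b)%N -> INR a <= INR b.
Proof. by move/leP; apply: le_INR. Qed.
Lemma INR_leq_inv (a b : nat) : INR a <= INR b -> (a <= b)%N.
Proof. by move/INR_le/leP. Qed.

Lemma log2R_ge (n : nat) : (0 < n)%N -> INR (trunc_log 2 n) <= log2R (INR n).
Proof.
move=> Hn; have H2 := trunc_logP (isT : (1 < 2)%N) Hn.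
have Hr : (pow 2 (trunc_log 2 n) <= INR n)%R by rewrite -INR_exp2; apply: INR_leq.
have Hpos : (0 < pow 2 (trunc_log 2 n))%R by apply: pow_lt; lra.
have Hln : (ln (pow 2 (trunc_log 2 n)) <= ln (INR n))%R.
  case: (Rle_lt_or_eq_dec _ _ Hr) => H; last by rewrite H; lra.
  by apply: Rlt_le; apply: ln_increasing.
rewrite ln_pow in Hln; last lra.
have Hl2 : (0 < ln 2)%R by have := ln_lt_2; lra.
rewrite /log2R; apply: (Rmult_le_reg_r (ln (IZR 2))); first exact: Hl2.
rewrite /Rdiv Rmult_assoc Rinv_l; lra.
Qed.

Lemma powerRZ_sub (n a : nat) : (a <= n)%N ->
  powerRZ 2 (Z.of_nat n - Z.of_nat a) = 2 ^ (n - a)%N.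
Proof. by move=> H; rewrite -Nat2Z.inj_sub -?pow_powerRZ //; apply/leP. Qed.

Theorem lemma1 :
  forall (U0 : seq bool -> option (seq bool))
         (U : seq bool -> seq bool -> option (seq bool)),
    universal_machine U0 -> universal_cond_machine U ->
    exists N : nat, forall n : nat, (N <= n)%nat ->
      forall (alpha : nat) (u : seq bool), size u = n ->
        (INR (KC U0 u) >= INR alpha + 12 * log2R (INR n))%R ->
        (Rinv (2 * INR n ^ 12) * powerRZ 2 (Z.of_nat n - Z.of_nat alpha)
           <= INR (d_alpha U0 U n alpha u))%R /\
        (INR (d_alpha U0 U n alpha u)
           <= INR n ^ 5 * powerRZ 2 (Z.of_nat n - Z.of_nat alpha))%R.
Proof.
move=> U0 U HU0 HU.
case: (main_nat HU0 HU) => L0 HL0.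
exists (2 ^ L0)%N => n Hn alpha u Hu Hk.
have Hn0 : (0 < n)%N by apply: leq_trans Hn; rewrite expn_gt0.
set l := trunc_log 2 n.
have Hlog := log2R_ge Hn0.
have Hk' : (alpha + 12 * l <= KC U0 u)%N.
  apply: INR_leq_inv; rewrite plus_INR -multE mult_INR.
  have E12 : INR 12 = 12 by simpl; lra.
  rewrite E12; rewrite -/l in Hlog; lra.
have [Han [[j [Hj [Hjn Hd1]]] Hd2]] := HL0 n Hn alpha u Hu Hk'.
set d := d_alpha U0 U n alpha u in Hd1 Hd2 *.
rewrite powerRZ_sub //.
have H2l : (2 ^ l <= n)%N by apply: trunc_logP.
have Rn : 2 ^ l <= INR n by rewrite -INR_exp2; apply: INR_leq.
have R2l : 0 < 2 ^ l by apply: pow_lt; lra.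
have Rnpos : 0 < INR n by apply: lt_0_INR; apply/ltP.
split.
- have E : 2 ^ (n - alpha)%N = 2 ^ (n - (alpha + j))%N * 2 ^ j.
    by rewrite -pow_add; congr (2 ^ _); lia.
  have Hdr : 2 ^ (n - (alpha + j))%N <= INR d by rewrite -INR_exp2; apply: INR_leq.
  have H2j : 2 ^ j <= 2 * INR n ^ 12.
    apply: Rle_trans (_ : 2 ^ (12 * l + 1) <= _).
      by apply: Rle_pow; [lra | apply/leP].
    rewrite pow_add mulnC pow_mult pow_1 Rmult_comm.
    apply: Rmult_le_compat_l; first lra.
    by apply: pow_incr; lra.
  have Hpos : 0 < 2 * INR n ^ 12 by apply: Rmult_lt_0_compat; [lra | apply: pow_lt].
  have Hp2 : 0 <= 2 ^ (n - (alpha + j))%N by apply: pow_le; lra.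
  have Hp3 : 0 <= 2 ^ j by apply: pow_le; lra.
  rewrite E.
  apply: Rle_trans Hdr.
  have HB : 2 ^ j * / (2 * INR n ^ 12) <= 1.
    apply: (Rmult_le_reg_r (2 * INR n ^ 12)) => //.
    rewrite Rmult_assoc Rinv_l; lra.
  have -> : / (2 * INR n ^ 12) * (2 ^ (n - (alpha + j))%N * 2 ^ j) =
    2 ^ (n - (alpha + j))%N * (2 ^ j * / (2 * INR n ^ 12)) by ring.
  rewrite -[X in _ <= X]Rmult_1_r.
  by apply: Rmult_le_compat_l.
- have Hdr : INR d <= 2 ^ (n - alpha + 5 * l)%N.
    by rewrite -INR_exp2; apply: INR_leq; apply: ltnW.
  apply: Rle_trans Hdr _.
  rewrite pow_add mulnC pow_mult Rmult_comm.
  apply: Rmult_le_compat_r; first by apply: pow_le; lra.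
  by apply: pow_incr; lra.
Qed.
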